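(* For every real $x\geq 13$, $(x-1)\sqrt{1-\dfrac{2\ln x+4}{x}}-x+\ln x+4\geq 0$.
   Context: $\ln$ denotes the natural logarithm. *)

(* Defs.v *)
From Stdlib Require Import Reals.

(* Main.v *)
Require Import Defs.
From Stdlib Require Import Reals Lra Psatz.
From Coquelicot Require Import Coquelicot.
Open Scope R_scope.

Lemma e_gt : 2.7 <= exp 1.
Proof.
  pose proof (exp_ge_taylor 1 5 ltac:(lra)) as H.
  simpl in H. unfold Factorial.fact in H; simpl in H. lra.
Qed.

Lemma ln_le_div_e : forall y, 0 < y -> ln y <= y / exp 1.
Proof.
  intros y Hy.
  pose proof (exp_ineq1_le (ln (y / exp 1))) as H.
  rewrite exp_ln in H by (apply Rdiv_lt_0_compat; [lra| apply exp_pos]).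
  rewrite ln_div in H by (try lra; apply exp_pos).
  rewrite ln_exp in H. lra.
Qed.

Theorem lemma3p3 : forall x : R, 13 <= x ->
  0 <= (x - 1) * sqrt (1 - (2 * ln x + 4) / x) - x + ln x + 4.
Proof.
  intros x Hx.
  set (s := sqrt x).
  assert (Hs2 : s * s = x) by (apply sqrt_sqrt; lra).
  assert (Hs0 : 0 <= s) by apply sqrt_pos.
  assert (Hs : 3.6 <= s).
  { unfold s. rewrite <- (sqrt_square 3.6) by lra. apply sqrt_le_1_alt; lra. }
  set (L := ln x).
  assert (HL0 : 0 <= L).
  { unfold L. rewrite <- ln_1. apply ln_le; lra. }
  assert (HLs : L <= 2 * s / exp 1).
  { unfold L. rewrite <- Hs2. rewrite ln_mult by lra.
    pose proof (ln_le_div_e s ltac:(lra)). unfold Rdiv in *. lra. }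
  pose proof e_gt as He.
  assert (HLa : L <= 0.7408 * s).
  { apply Rle_trans with (1 := HLs).
    apply Rmult_le_reg_r with (exp 1); [lra|].
    unfold Rdiv. rewrite Rmult_assoc, Rinv_l by lra. nra. }
  assert (HL2 : L * L <= 0.7408 * 0.7408 * x) by nra.
  assert (H1 : 0 <= 2 * x - L * L - 4 * L - 7 - (2 * L + 4) / 13) by nra.
  assert (HD : 0 <= 2 * x * x - (L * L + 4 * L + 7) * x - 2 * L - 4) by nra.
  assert (HB : 0 <= x - L - 4) by nra.
  set (B := x - L - 4) in *.
  set (A := 1 - (2 * L + 4) / x).
  assert (HA : A - (B / (x - 1)) ^ 2 =
     (2 * x * x - (L * L + 4 * L + 7) * x - 2 * L - 4) / (x * (x - 1) ^ 2)).
  { unfold A, B. field. lra. }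
  assert (HA' : (B / (x - 1)) ^ 2 <= A).
  { assert (0 <= (2 * x * x - (L * L + 4 * L + 7) * x - 2 * L - 4) / (x * (x - 1) ^ 2)).
    { apply Rdiv_le_0_compat; [lra|]. apply Rmult_lt_0_compat; [lra|].
      apply pow_lt; lra. }
    lra. }
  assert (Hq : B / (x - 1) <= sqrt A).
  { rewrite <- (sqrt_pow2 (B / (x - 1))).
    - apply sqrt_le_1_alt. exact HA'.
    - apply Rdiv_le_0_compat; lra. }
  assert (Hm : (x - 1) * (B / (x - 1)) = B) by (field; lra).
  assert ((x - 1) * (B / (x - 1)) <= (x - 1) * sqrt A)
    by (apply Rmult_le_compat_l; lra).
  unfold B in *. lra.
Qed.
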